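(* Let $\mathbf W$, $\mathbf L_{rw}$ be as in the context, let $\mu>0$, and let $\mathbf H\in\{0,1\}^{K\times N}$ with $1\le K<N$ be a sampling matrix (each row has exactly one entry $1$, in distinct columns). Then $\mathbf H^\top\mathbf H+\mu\,\mathbf L_{rw}^\top\mathbf L_{rw}$ is positive definite; consequently, for every $\mathbf y\in\mathbb R^K$ the problem $\min_{\mathbf x\in\mathbb R^N}\|\mathbf H\mathbf x-\mathbf y\|_2^2+\mu\,\mathbf x^\top\mathbf L_{rw}^\top\mathbf L_{rw}\mathbf x$ has the unique minimizer $\mathbf x^*=(\mathbf H^\top\mathbf H+\mu\mathbf L_{rw}^\top\mathbf L_{rw})^{-1}\mathbf H^\top\mathbf y$.
   Context: A directed graph on $N$ nodes is given by an adjacency matrix $\mathbf W\in\mathbb R^{N\times N}$ with $W_{i,j}\ge 0$ ($W_{i,j}>0$ iff there is a directed edge $(i,j)$) and $W_{i,i}=0$ for all $i$. The out-degree matrix is the diagonal matrix $\mathbf D$ with $D_{i,i}=\sum_j W_{i,j}$; it is assumed that $D_{i,i}>0$ for all $i$. The normalized adjacency matrix is $\bar{\mathbf W}=\mathbf D^{-1}\mathbf W$ and the random-walk Laplacian is $\mathbf L_{rw}=\mathbf I-\bar{\mathbf W}$. It is assumed that there exists a node $v$ such that from every other node there is a directed path to $v$. *)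

(* Defs.v *)
From mathcomp Require Import all_boot all_order all_algebra.
Set Implicit Arguments. Unset Strict Implicit. Unset Printing Implicit Defensive.
Import Order.TTheory GRing.Theory Num.Theory.
Local Open Scope ring_scope.

Definition edge (R : realFieldType) (N : nat) (W : 'M[R]_N) : rel 'I_N :=
  fun i j => 0 < W i j.

Definition degmx (R : realFieldType) (N : nat) (W : 'M[R]_N) : 'M[R]_N :=
  diag_mx (\row_i \sum_j W i j).

Definition normadj (R : realFieldType) (N : nat) (W : 'M[R]_N) : 'M[R]_N :=
  invmx (degmx W) *m W.

Definition Lrw (R : realFieldType) (N : nat) (W : 'M[R]_N) : 'M[R]_N :=
  1%:M - normadj W.

Definition sampling_matrix (R : realFieldType) (K N : nat) (H : 'M[R]_(K, N)) : Prop :=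
  (forall k j, H k j = 0 \/ H k j = 1) /\
  (forall k, exists j, H k j = 1 /\ forall j', H k j' = 1 -> j' = j) /\
  (forall k k' j, H k j = 1 -> H k' j = 1 -> k = k').

Definition posdef (R : realFieldType) (N : nat) (A : 'M[R]_N) : Prop :=
  A^T = A /\ forall x : 'cV[R]_N, x != 0 -> 0 < (x^T *m A *m x) 0 0.

Definition sqnorm (R : realFieldType) (n : nat) (v : 'cV[R]_n) : R :=
  \sum_i (v i 0) ^+ 2.

Definition objective (R : realFieldType) (K N : nat) (H : 'M[R]_(K, N))
  (L : 'M[R]_N) (mu : R) (y : 'cV[R]_K) (x : 'cV[R]_N) : R :=
  sqnorm (H *m x - y) + mu * (x^T *m L^T *m L *m x) 0 0.

(* Main.v *)
Require Import Defs.
From mathcomp Require Import all_boot all_order all_algebra.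
From mathcomp Require Import ring.
Import Order.TTheory GRing.Theory Num.Theory.
Import Order.TTheory GRing.Theory Num.Theory.
Local Open Scope ring_scope.
Lemma harm_eq (R : realFieldType) (N : nat) (W : 'M[R]_N) (x : 'cV[R]_N) :
  (forall i, 0 < \sum_j W i j) -> Lrw W *m x = 0 ->
  forall i, \sum_j W i j * (x i 0 - x j 0) = 0.
Proof.
move=> hd hL i.
have Du : degmx W \in unitmx.
  rewrite unitmxE /degmx det_diag unitfE; apply/prodf_neq0 => k _.
  by rewrite mxE gt_eqF.
have h : degmx W *m (Lrw W *m x) = 0 by rewrite hL mulmx0.
rewrite /Lrw /normadj mulmxA mulmxBr mulmx1 mulmxA mulmxV //  in h.
rewrite mul1mx mulmxBl /degmx mul_diag_mx in h.
have := congr1 (fun A : 'M[R]_(N,1) => A i 0) h.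
rewrite !mxE /=.
move=> e.
under eq_bigr => j _ do rewrite mulrBr.
rewrite sumrB -mulr_suml.
exact: e.
Qed.

Lemma harm_le (R : realFieldType) (N : nat) (W : 'M[R]_N) (x : 'cV[R]_N) (v : 'I_N) :
  (forall i j, 0 <= W i j) -> (forall i, 0 < \sum_j W i j) ->
  (forall i, i != v -> connect (edge W) i v) -> Lrw W *m x = 0 ->
  forall i, x i 0 <= x v 0.
Proof.
move=> hW hd hc hL.
have he := harm_eq _ _ _ _ hd hL.
case: (@arg_maxP _ _ _ v predT (fun k => x k 0) isT) => i0 _ Hmax.
suff -> : x v 0 = x i0 0 by move=> i; exact: Hmax.
have step : forall k j, x k 0 = x i0 0 -> edge W k j -> x j 0 = x i0 0.
  move=> k j hk hkj.
  have nn : forall j, predT j -> 0 <= W k j * (x k 0 - x j 0).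
    by move=> j' _; apply: mulr_ge0 => //; rewrite subr_ge0 hk; exact: Hmax.
  have h0 := @psumr_eq0P _ _ predT (fun j => W k j * (x k 0 - x j 0)) nn (he k) j isT.
  move/eqP: h0; rewrite mulf_eq0 => /orP [/eqP hz|]; first by move: hkj; rewrite /edge hz ltxx.
  by rewrite subr_eq0 => /eqP <-.
have [->//|nv] := eqVneq i0 v.
move: (hc i0 nv) => /connectP [p hp ->].
have gen : forall k q, x k 0 = x i0 0 -> path (edge W) k q -> x (last k q) 0 = x i0 0.
  move=> k q; elim: q k => [|a q IH] k //= hk /andP [hka hq].
  exact: IH (step _ _ hk hka) hq.
exact: gen.
Qed.
Lemma tr11 (R : realFieldType) (A : 'M[R]_1) : A 0 0 = A^T 0 0.
Proof. by rewrite mxE. Qed.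
Lemma e_add (R : realFieldType) (A B : 'M[R]_1) : (A + B) 0 0 = A 0 0 + B 0 0.
Proof. by rewrite mxE. Qed.
Lemma e_opp (R : realFieldType) (A : 'M[R]_1) : (- A) 0 0 = - A 0 0.
Proof. by rewrite mxE. Qed.
Lemma e_scale (R : realFieldType) c (A : 'M[R]_1) : (c *: A) 0 0 = c * A 0 0.
Proof. by rewrite mxE. Qed.

Lemma trD (R : realFieldType) m n (A B : 'M[R]_(m,n)) : (A + B)^T = A^T + B^T.
Proof. by apply/matrixP => i j; rewrite !mxE. Qed.
Lemma trB (R : realFieldType) m n (A B : 'M[R]_(m,n)) : (A - B)^T = A^T - B^T.
Proof. by apply/matrixP => i j; rewrite !mxE. Qed.
Lemma trZ (R : realFieldType) m n c (A : 'M[R]_(m,n)) : (c *: A)^T = c *: A^T.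
Proof. by apply/matrixP => i j; rewrite !mxE. Qed.

Lemma trN (R : realFieldType) m n (A : 'M[R]_(m,n)) : (- A)^T = - A^T.
Proof. by apply/matrixP => i j; rewrite !mxE. Qed.

Lemma sqn (R : realFieldType) n (v : 'cV[R]_n) : sqnorm v = (v^T *m v) 0 0.
Proof. by rewrite mxE /sqnorm; apply eq_bigr => i _; rewrite !mxE expr2. Qed.

Lemma obj_split (R : realFieldType) K N (H : 'M[R]_(K,N)) (L : 'M[R]_N) mu y u d :
  objective H L mu y (u + d) = objective H L mu y u +
    2 * (d^T *m ((H^T *m H + mu *: (L^T *m L)) *m u - H^T *m y)) 0 0 +
    (d^T *m (H^T *m H + mu *: (L^T *m L)) *m d) 0 0.
Proof.
rewrite /objective !sqn.
rewrite !(trD, trB, trZ, mulmxDl, mulmxDr, mulmxBl, mulmxBr).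
rewrite -!(scalemxAl, scalemxAr) !trN !trmx_mul !(mulmxN, mulNmx) !mulmxA.
rewrite !(e_add, e_opp, e_scale).
have s1 : (u^T *m H^T *m H *m d) 0 0 = (d^T *m H^T *m H *m u) 0 0.
  by rewrite tr11 !trmx_mul !trmxK !mulmxA.
have s2 : (y^T *m H *m d) 0 0 = (d^T *m H^T *m y) 0 0.
  by rewrite tr11 !trmx_mul !trmxK !mulmxA.
have s3 : (u^T *m L^T *m L *m d) 0 0 = (d^T *m L^T *m L *m u) 0 0.
  by rewrite tr11 !trmx_mul !trmxK !mulmxA.
rewrite s1 s2 s3.
ring.
Qed.

Theorem mainTheorem3 (R : realFieldType) (N K : nat) (W : 'M[R]_N)
  (H : 'M[R]_(K, N)) (mu : R) :
  (forall i j, 0 <= W i j) ->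
  (forall i, W i i = 0) ->
  (forall i, 0 < \sum_j W i j) ->
  (exists v : 'I_N, forall i, i != v -> connect (edge W) i v) ->
  0 < mu ->
  (1 <= K)%N -> (K < N)%N ->
  sampling_matrix H ->
  let M := H^T *m H + mu *: ((Lrw W)^T *m Lrw W) in
  posdef M /\ M \in unitmx /\
  forall y : 'cV[R]_K,
    let xs := invmx M *m (H^T *m y) in
    (forall x, objective H (Lrw W) mu y xs <= objective H (Lrw W) mu y x) /\
    (forall x, (forall z, objective H (Lrw W) mu y x <= objective H (Lrw W) mu y z) ->
               x = xs).
Proof.
move=> hW hWii hd [v hc] hmu hK hKN [H01 [Hrow Hcol]] M.
have Q : forall x, (x^T *m M *m x) 0 0 = sqnorm (H *m x) + mu * sqnorm (Lrw W *m x).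
  move=> x; rewrite !sqn /M mulmxDr mulmxDl -scalemxAr -scalemxAl e_add e_scale.
  by rewrite !trmx_mul !mulmxA.
have sq0 : forall n (w : 'cV[R]_n), 0 <= sqnorm w.
  by move=> n w; apply: sumr_ge0 => i _; exact: sqr_ge0.
have sqz : forall n (w : 'cV[R]_n), sqnorm w = 0 -> w = 0.
  move=> n w h; apply/matrixP => i j; rewrite (ord1 j) [RHS]mxE.
  have := @psumr_eq0P _ _ predT (fun i => (w i 0) ^+ 2) (fun i _ => sqr_ge0 (w i 0)) h i isT.
  by move/eqP; rewrite sqrf_eq0 => /eqP.
have Msym : M^T = M by rewrite /M trD trZ !trmx_mul !trmxK.
have pd : posdef M.
  split=> // x nx; rewrite Q.
  have h1 := sq0 _ (H *m x); have h2 := sq0 _ (Lrw W *m x).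
  rewrite lt_neqAle (addr_ge0 h1 (mulr_ge0 (ltW hmu) h2)) andbT eq_sym.
  apply: contra nx.
  rewrite (paddr_eq0 h1 (mulr_ge0 (ltW hmu) h2)) mulf_eq0 (gt_eqF hmu) /= => /andP [/eqP a /eqP b].
  have hx0 := sqz _ _ a; have lx := sqz _ _ b.
  have cst : forall i, x i 0 = x v 0.
    move=> i; have le1 := harm_le _ _ _ _ _ hW hd hc lx i.
    have lx' : Lrw W *m (- x) = 0 by rewrite mulmxN lx oppr0.
    have le2 := harm_le _ _ _ _ _ hW hd hc lx' i.
    rewrite !mxE lerN2 in le2.
    by apply/eqP; rewrite eq_le le1 le2.
  pose k0 : 'I_K := Ordinal hK.
  have [j [hj hju]] := Hrow k0.
  have : (H *m x) k0 0 = x v 0.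
    rewrite mxE (bigD1 j) //= hj mul1r cst big1 ?addr0 // => j' nj'.
    case: (H01 k0 j') => e; first by rewrite e mul0r.
    by move: nj'; rewrite (hju j' e) eqxx.
  rewrite hx0 mxE => hv.
  apply/eqP/matrixP => i jj; rewrite (ord1 jj) cst -hv [RHS]mxE.
  by [].
have Mu : M \in unitmx.
  rewrite unitmxE unitfE; apply/negP => /det0P [w nw hw].
  have nwT : w^T != 0.
    apply: contra nw => /eqP h; apply/eqP; rewrite -[w]trmxK h.
    by apply/matrixP => i j; rewrite !mxE.
  by have := pd.2 _ nwT; rewrite trmxK hw mul0mx mxE ltxx.
split=> //; split=> // y xs.
have Mxs : M *m xs = H^T *m y by rewrite /xs mulKVmx.
have key : forall x, objective H (Lrw W) mu y x =
    objective H (Lrw W) mu y xs + ((x - xs)^T *m M *m (x - xs)) 0 0.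
  move=> x.
  have e : objective H (Lrw W) mu y x = objective H (Lrw W) mu y (xs + (x - xs)).
    by rewrite addrC subrK.
  rewrite e obj_split -/M Mxs subrr mulmx0 mxE mulr0 addr0.
  by [].
have Qge : forall z : 'cV[R]_N, 0 <= (z^T *m M *m z) 0 0.
  move=> z; have [->|nz] := eqVneq z 0; last exact: ltW (pd.2 _ nz).
  by rewrite mulmx0 mxE.
split.
  by move=> x; rewrite (key x) lerDl.
move=> x hx; have := hx xs; rewrite (key x) gerDl => hle.
apply/eqP; rewrite -subr_eq0; apply/negPn/negP => nz.
by have := pd.2 _ nz; rewrite ltNge hle.
Qed.
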